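(* Let $A$ be a valuation ring with $2\in A^\times$, and let $[u_1,\dots,u_r]$ and $[v_1,\dots,v_s]$ be possibly empty frames in $\mathbb E^n_A$ spanning quadratic submodules $U$ and $V$ respectively. Then $U^\perp\cap V^\perp$ contains a non-singular subspace of dimension at least $n-r-2s$.
   Context: $\mathbb E^n_A=(A^n,q)$, $q(x)=x_1^2+\dots+x_n^2$, $B_q(x,y)=q(x+y)-q(x)-q(y)$. A unit vector is $v$ with $q(v)=1$; a frame is a finite set of unit vectors $w_i$ with $B_q(w_i,w_j)=0$ for $i\neq j$; $S^\perp=\{x:B_q(x,s)=0\ \forall s\in S\}$. A quadratic submodule is a direct summand with restricted form. A non-singular subspace of dimension $d$ means a free $A$-submodule $W$ of rank $d$ such that $x\mapsto B_q(x,-)|_W$ is an isomorphism $W\to\mathrm{Hom}_A(W,A)$. A valuation ring is a domain $A$ with fraction field $K$ such that $x\in A$ or $x^{-1}\in A$ for each $x\in K^\times$. *)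

(* Defs.v *)
From HB Require Import structures.
From mathcomp Require Import all_boot all_order all_algebra fraction.
Set Implicit Arguments. Unset Strict Implicit. Unset Printing Implicit Defensive.
Import Order.TTheory GRing.Theory Num.Theory.
Local Open Scope ring_scope.

Definition in_A (A : idomainType) (x : {fraction A}) : Prop :=
  exists a : A, x = @FracField.tofrac A a.

Definition valuation_ring (A : idomainType) : Prop :=
  forall x : {fraction A}, x != 0 -> in_A x \/ in_A x^-1.

(* E^n_A = (A^n, q), vectors are row vectors 'rV[A]_n *)
Definition qform (A : comNzRingType) (n : nat) (x : 'rV[A]_n) : A :=
  \sum_(i < n) (x 0 i) ^+ 2.

Definition Bq (A : comNzRingType) (n : nat) (x y : 'rV[A]_n) : A :=
  qform (x + y) - qform x - qform y.

Definition is_frame (A : comNzRingType) (n k : nat) (w : 'I_k -> 'rV[A]_n) : Prop :=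
  (forall i, qform (w i) = 1) /\ (forall i j, i != j -> Bq (w i) (w j) = 0).

Definition fspan (A : comNzRingType) (n k : nat) (w : 'I_k -> 'rV[A]_n)
  : 'rV[A]_n -> Prop :=
  fun x => exists c : 'I_k -> A, x = \sum_(i < k) c i *: w i.

Definition perp (A : comNzRingType) (n : nat) (S : 'rV[A]_n -> Prop)
  : 'rV[A]_n -> Prop :=
  fun x => forall s, S s -> Bq x s = 0.

Definition free_of_rank (A : comNzRingType) (n d : nat) (W : 'rV[A]_n -> Prop) : Prop :=
  exists w : 'I_d -> 'rV[A]_n,
    (forall c : 'I_d -> A, \sum_(i < d) c i *: w i = 0 -> forall i, c i = 0) /\
    (forall x, W x <-> fspan w x).

Definition linform_on (A : comNzRingType) (n : nat) (W : 'rV[A]_n -> Prop)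
  (f : 'rV[A]_n -> A) : Prop :=
  forall (a : A) x y, W x -> W y -> f (a *: x + y) = a * f x + f y.

(* x |-> B_q(x,-)|_W is an isomorphism W -> Hom_A(W,A): every linear form on W
   is B_q(x,-)|_W for exactly one x in W (linearity of the map is automatic). *)
Definition nonsingular (A : comNzRingType) (n : nat) (W : 'rV[A]_n -> Prop) : Prop :=
  forall f, linform_on W f ->
    (exists x, W x /\ forall y, W y -> Bq x y = f y) /\
    (forall x x', W x -> W x' -> (forall y, W y -> Bq x y = f y) ->
       (forall y, W y -> Bq x' y = f y) -> x = x').

Definition nonsingular_subspace (A : comNzRingType) (n d : nat) (W : 'rV[A]_n -> Prop) : Prop :=
  free_of_rank d W /\ nonsingular W.

(* Main.v *)
Require Import Defs.
From HB Require Import structures.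
From mathcomp Require Import all_boot all_order all_algebra fraction.
From mathcomp Require Import ring.
Import GRing.Theory.
Local Open Scope ring_scope.
Set Implicit Arguments. Unset Strict Implicit.
Definition bf (A : comUnitRingType) d (G : 'M[A]_d) (x y : 'rV[A]_d) : A := (x *m G *m y^T) 0 0.

Section Loc.
Variable A : idomainType.
Hypothesis vA : valuation_ring A.

Lemma vdiv (a b : A) : (exists t, a = t * b) \/ (exists t, b = t * a).
Proof.
have [->|a0] := eqVneq a 0; first by left; exists 0; rewrite mul0r.
have [->|b0] := eqVneq b 0; first by right; exists 0; rewrite mul0r.
have x0 : (FracField.tofrac a / FracField.tofrac b) != 0.
  by rewrite mulf_neq0 ?invr_eq0 ?tofrac_eq0.
case: (vA x0) => [[t ht]|[t ht]].
- left; exists t; apply/eqP; rewrite -tofrac_eq tofracM -ht.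
  by rewrite divfK ?tofrac_eq0.
- right; exists t; apply/eqP; rewrite -tofrac_eq tofracM -ht invfM invrK.
  by rewrite mulrAC mulVf ?mul1r ?tofrac_eq0.
Qed.

Lemma loc (x y : A) : x + y \is a GRing.unit -> x \is a GRing.unit \/ y \is a GRing.unit.
Proof.
case: (vdiv x y) => [[t ->]|[t ->]] => h.
- by right; move: h; rewrite -{2}(mul1r y) -mulrDl unitrM => /andP[].
- by left; move: h; rewrite -{1}(mul1r x) -mulrDl unitrM => /andP[].
Qed.

Lemma loc_sum n (F : 'I_n -> A) : \sum_(i < n) F i \is a GRing.unit ->
  exists i, F i \is a GRing.unit.
Proof.
elim: n F => [|n IH] F; first by rewrite big_ord0 unitr0.
rewrite big_ord_recr /= => /loc [/IH [i hi]|h]; last by exists ord_max.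
by exists (widen_ord (leqnSn n) i).
Qed.

Lemma loc_1m (a b : A) : a \isn't a GRing.unit -> a * b - 1 \is a GRing.unit.
Proof.
move=> na; have : a * b + (1 - a * b) \is a GRing.unit by rewrite addrC subrK unitr1.
case/loc => [|h]; first by rewrite unitrM (negbTE na).
by rewrite -unitrN opprB.
Qed.

Lemma loc_2 (a b : A) : (2%:R : A) \is a GRing.unit -> a \isn't a GRing.unit ->
  b \isn't a GRing.unit -> a + b + 2%:R \is a GRing.unit.
Proof.
move=> u2 na nb.
have nab : a + b \isn't a GRing.unit by apply/negP => /loc [] ?; [move/negP: na|move/negP: nb].
have : (a + b + 2%:R) + (- (a + b)) \is a GRing.unit by rewrite addrAC subrr add0r.
by case/loc => // h; move: nab; rewrite -unitrN h.
Qed.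
End Loc.
Section BF.
Variable A : comUnitRingType.
Variables (d : nat) (G : 'M[A]_d).
Lemma bfDl x y z : bf G (x + y) z = bf G x z + bf G y z.
Proof. by rewrite /bf !mulmxDl mxE. Qed.
Lemma bfDr x y z : bf G z (x + y) = bf G z x + bf G z y.
Proof. by rewrite /bf linearD /= mulmxDr mxE. Qed.
Lemma bfZl a x z : bf G (a *: x) z = a * bf G x z.
Proof. by rewrite /bf -!scalemxAl mxE. Qed.
Lemma bfZr a x z : bf G z (a *: x) = a * bf G z x.
Proof. by rewrite /bf linearZ /= -scalemxAr mxE. Qed.
Lemma bfBl x y z : bf G (x - y) z = bf G x z - bf G y z.
Proof. by rewrite -scaleN1r bfDl bfZl mulN1r. Qed.
Lemma bfBr x y z : bf G z (x - y) = bf G z x - bf G z y.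
Proof. by rewrite -scaleN1r bfDr bfZr mulN1r. Qed.
Lemma bf0r x : bf G x 0 = 0.
Proof. by rewrite /bf trmx0 mulmx0 mxE. Qed.
Lemma bfC x y : G^T = G -> bf G x y = bf G y x.
Proof.
move=> Gs; rewrite /bf.
rewrite [LHS](_ : _ = ((x *m G *m y^T)^T) 0 0); last by rewrite [RHS]mxE.
by rewrite !trmx_mul trmxK Gs mulmxA.
Qed.
End BF.
Section US.
Variable A : comUnitRingType.
Hypothesis locs : forall n (F : 'I_n -> A), \sum_(i < n) F i \is a GRing.unit ->
  exists i, F i \is a GRing.unit.


Lemma unit_step d (G : 'M[A]_d.+1) (h : 'rV[A]_d.+1) :
  G^T = G -> G \in unitmx -> bf G h h \is a GRing.unit ->
  exists (C : 'M[A]_(d, d.+1)) (D : 'M[A]_(d.+1, d)),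
   [/\ C *m G *m h^T = 0, C *m G *m C^T \in unitmx &
   forall m (X : 'M_(m, d.+1)), X *m G *m h^T = 0 -> X = X *m D *m C].
Proof.
move=> Gs Gu hu.
set w := h *m G.
have wh : G *m h^T = w^T by rewrite /w trmx_mul Gs.
have [k wk] : exists k, w 0 k \is a GRing.unit.
  move: hu; rewrite /bf mxE => /locs [k]; rewrite unitrM => /andP [wk _].
  exists k; exact: wk.
set ek : 'rV[A]_d.+1 := delta_mx 0 k.
set D : 'M[A]_(d.+1, d) := \matrix_(j, i) ((j == lift k i)%:R).
set P : 'M[A]_d.+1 := 1%:M - (w 0 k)^-1 *: (w^T *m ek).
have ekw : ek *m w^T = (w 0 k)%:M.
  by rewrite /ek -rowE [LHS]mx11_scalar !mxE.
have F1 : P *m w^T = 0.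
  rewrite /P mulmxBl mul1mx -scalemxAl -mulmxA ekw mul_mx_scalar scalerA.
  by rewrite mulVr // scale1r subrr.
have F2 : ek *m P = 0.
  rewrite /P mulmxBr mulmx1 -scalemxAr mulmxA ekw mul_scalar_mx scalerA.
  by rewrite mulVr // scale1r subrr.
have F3 : ek *m D = 0.
  by rewrite /ek -rowE; apply/matrixP => i j; rewrite !mxE (negbTE (neq_lift k j)).
have F4 : D^T *m D = 1%:M.
  apply/matrixP => i j; rewrite !mxE.
  rewrite (bigD1 (lift k i)) //= big1 ?addr0.
    by rewrite !mxE eqxx mul1r (inj_eq (@lift_inj _ k)).
  by move=> l /negbTE hl; rewrite !mxE hl mul0r.
have F5 : D *m D^T = 1%:M - ek^T *m ek.
  apply/matrixP => i j; rewrite !mxE.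
  case: (unliftP k i) => [i0 ->|->].
    rewrite (bigD1 i0) //= big1 ?addr0.
      rewrite !mxE eqxx mul1r big_ord1 !mxE [lift k i0 == k]eq_sym (negbTE (neq_lift k i0)) andbF mul0r subr0.
      by rewrite eq_sym.
    by move=> l /negbTE hl; rewrite !mxE (inj_eq (@lift_inj _ k)) eq_sym hl mul0r.
  rewrite big1; last by move=> l _; rewrite !mxE (negbTE (neq_lift k l)) mul0r.
  by rewrite big_ord1 !mxE eqxx !mul1r eq_sym subrr.
set C : 'M[A]_(d, d.+1) := D^T *m P.
have PX : forall m (X : 'M_(m, d.+1)), X *m w^T = 0 -> X *m P = X.
  by move=> m X Xw; rewrite /P mulmxBr mulmx1 -scalemxAr mulmxA Xw mul0mx scaler0 subr0.
have Ex : forall m (X : 'M_(m, d.+1)), X *m w^T = 0 -> X = X *m D *m C.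
  move=> m X Xw; rewrite /C mulmxA -(mulmxA X) F5 (mulmxBr X) mulmx1.
  by rewrite (mulmxBl X) -!(mulmxA X) -(mulmxA ek^T) F2 !mulmx0 subr0 PX.
have F6 : C *m G *m h^T = 0 by rewrite -mulmxA wh /C -mulmxA F1 mulmx0.
have F7 : C *m D = 1%:M.
  by rewrite /C -mulmxA /P mulmxBl mul1mx -scalemxAl -mulmxA F3 mulmx0 scaler0 subr0 F4.
exists C, D; split => //; last first.
  by move=> m X; rewrite -mulmxA wh; apply: Ex.
set Z := D^T *m invmx G.
have Z1 : Z *m G *m C^T = 1%:M.
  by rewrite /Z -(mulmxA D^T) mulVmx // mulmx1 -trmx_mul F7 trmx1.
set q := bf G h h.
have hh : h *m G *m h^T = q%:M by rewrite [LHS]mx11_scalar.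
have hC : h *m G *m C^T = 0.
  by move: (congr1 trmx F6); rewrite !trmx_mul trmxK Gs mulmxA trmx0.
set pZ := Z - (Z *m G *m h^T) *m (q^-1 *: h).
have pZh : pZ *m G *m h^T = 0.
  rewrite /pZ !mulmxBl -!mulmxA -!scalemxAl !mulmxA hh scale_scalar_mx mulVr //.
  by rewrite mulmx1 subrr.
have pZC : pZ *m G *m C^T = 1%:M.
  rewrite /pZ !mulmxBl Z1 -!mulmxA -!scalemxAl.
  by rewrite (mulmxA h) hC scaler0 !mulmx0 subr0.
have : (pZ *m D) *m (C *m G *m C^T) = 1%:M.
  rewrite mulmxA mulmxA -(Ex _ pZ) ?pZC //.
  by rewrite -wh mulmxA pZh.
by case/mulmx1_unit.
Qed.
End US.

Section VS.
Variable A : idomainType.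
Hypothesis vA : valuation_ring A.
Hypothesis u2 : (2%:R : A) \is a GRing.unit.

Lemma vmin d (v : 'rV[A]_d) : v != 0 ->
  exists k, v 0 k != 0 /\ forall j, exists t, v 0 j = t * v 0 k.
Proof.
move=> v0.
suff H : forall s : seq 'I_d, has (fun j => v 0 j != 0) s ->
  exists k, v 0 k != 0 /\ forall j, j \in s -> exists t, v 0 j = t * v 0 k.
  have hE : has (fun j => v 0 j != 0) (enum 'I_d).
    apply: contraNT v0 => /hasPn h; apply/eqP/matrixP => i j.
    by rewrite (ord1 i) mxE; move: (h j); rewrite mem_enum negbK => /(_ isT) /eqP.
  have [k [k0 hk]] := H (enum 'I_d) hE.
  by exists k; split => // j; apply: hk; rewrite mem_enum.
elim => [//|j s IH] /=.
have [hs|hs] := boolP (has (fun j => v 0 j != 0) s).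
  have [k [k0 hk]] := IH hs.
  case: (vdiv vA (v 0 j) (v 0 k)) => [[t ht]|[t ht]].
    exists k; split => // l; rewrite inE => /orP [/eqP ->|/hk //]; by exists t.
  have j0 : v 0 j != 0 by apply: contraNneq k0; rewrite ht => ->; rewrite mulr0.
  exists j; split => // l; rewrite inE => /orP [/eqP ->|/hk [t' ->]].
    by exists 1; rewrite mul1r.
  by exists (t' * t); rewrite ht mulrA.
move=> /orP [j0|j0]; last by move/negP: hs.
exists j; split => // l; rewrite inE => /orP [/eqP ->|ls]; first by exists 1; rewrite mul1r.
exists 0; rewrite mul0r; move/hasPn: hs => /(_ l ls); by rewrite negbK => /eqP.
Qed.

Lemma v_step d (G : 'M[A]_d) (v : 'rV[A]_d) : G^T = G -> G \in unitmx ->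
  exists m (hs : 'I_m -> 'rV[A]_d), [/\ (m <= 2)%N,
    (forall i, bf G (hs i) (hs i) \is a GRing.unit),
    (forall i j, i != j -> bf G (hs i) (hs j) = 0) &
    (forall x, (forall i, bf G x (hs i) = 0) -> bf G x v = 0)].
Proof.
move=> Gs Gu.
have [->|v0] := eqVneq v 0.
  by exists 0, (fun i => 0); split => //; [case|case|move=> x _; rewrite bf0r].
have [k [k0 hk]] := vmin v0.
have hk' : forall j, exists t, v 0 j == t * v 0 k.
  by move=> j; have [t ht] := hk j; exists t; apply/eqP.
pose c0 : 'rV[A]_d := \row_j xchoose (hk' j).
have vc : v = v 0 k *: c0.
  apply/matrixP => i j; rewrite (ord1 i) !mxE.
  by rewrite mulrC; apply/eqP; exact: (xchooseP (hk' j)).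
have c0k : c0 0 k = 1.
  have e : v 0 k = v 0 k * c0 0 k by rewrite {1}vc mxE.
  by apply: (mulIf k0); rewrite mul1r mulrC -e.
pose ek : 'rV[A]_d := delta_mx 0 k.
pose y := ek *m invmx G.
have c0y : bf G c0 y = 1.
  rewrite /bf /y trmx_mul trmx_inv Gs mulmxA -(mulmxA c0) mulmxV // mulmx1.
  by rewrite /ek trmx_delta -colE mxE.
have yc0 : bf G y c0 = 1 by rewrite bfC.
pose al := bf G c0 c0.
have [au|an] := boolP (al \is a GRing.unit).
  exists 1, (fun _ => c0); split => //.
    by move=> i j; rewrite !ord1 eqxx.
  by move=> x H; rewrite vc bfZr (H ord0) mulr0.
pose be := bf G y y.
pose h1 := if be \is a GRing.unit then y else c0 + y.
pose q1 := bf G h1 h1.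
pose ga := bf G c0 h1.
have key : al * q1 - ga ^+ 2 = al * be - 1.
  rewrite /q1 /ga /h1; case: ifP => _; first by rewrite c0y expr1n.
  rewrite !bfDl !bfDr -/al -/be c0y yc0. ring.
have q1u : q1 \is a GRing.unit.
  rewrite /q1 /h1; case: ifP => // /negbT bn.
  rewrite !bfDl !bfDr -/al -/be c0y yc0.
  have -> : al + 1 + (1 + be) = al + be + 2%:R by ring.
  exact: loc_2.
pose h2 := c0 - (ga / q1) *: h1.
have h21 : bf G h2 h1 = 0 by rewrite bfBl bfZl divrK // subrr.
have h12 : bf G h1 h2 = 0 by rewrite bfC.
have q2u : bf G h2 h2 \is a GRing.unit.
  have e : bf G h2 h2 = al - ga / q1 * ga.
    by rewrite {1}/h2 bfBl bfZl h12 mulr0 subr0 bfBr bfZr.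
  have : bf G h2 h2 * q1 \is a GRing.unit.
    rewrite e mulrBl (mulrAC (ga / q1)) divrK // -expr2 key.
    exact: loc_1m.
  by rewrite unitrM => /andP [].
exists 2, (fun i : 'I_2 => if i == ord0 then h1 else h2); split => //.
- by move=> i; case: ifP.
- by move=> [[|[|i]] hi] [[|[|j]] hj] //=.
move=> x H.
have e1 := H ord0; have e2 := H (Ordinal (isT : (1 < 2)%N)); rewrite /= in e1 e2.
have xc : bf G x c0 = 0.
  by move: e2; rewrite bfBr bfZr e1 mulr0 subr0.
by rewrite vc bfZr xc mulr0.
Qed.
End VS.

Section Main.
Variable A : idomainType.
Hypothesis vA : valuation_ring A.
Hypothesis u2 : (2%:R : A) \is a GRing.unit.

Definition PP s r := forall d (G : 'M[A]_d) (u : 'I_r -> 'rV[A]_d) (v : 'I_s -> 'rV[A]_d),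
  G^T = G -> G \in unitmx ->
  (forall i, bf G (u i) (u i) \is a GRing.unit) ->
  (forall i j, i != j -> bf G (u i) (u j) = 0) ->
  exists d' (C : 'M[A]_(d', d)), [/\ (d - r - 2 * s <= d')%N, C *m G *m C^T \in unitmx,
    (forall i, C *m G *m (u i)^T = 0) & (forall j, C *m G *m (v j)^T = 0)].

Lemma bf_entry m d (G : 'M[A]_d) (X : 'M[A]_(m, d)) y i : (X *m G *m y^T) i 0 = bf G (row i X) y.
Proof. by rewrite /bf -!row_mul [RHS]mxE. Qed.

Lemma bf_mx d (G : 'M[A]_d) x y : bf G x y = 0 -> x *m G *m y^T = 0.
Proof. by move=> H; apply/matrixP => i j; rewrite !ord1 [RHS]mxE. Qed.

Lemma bf_C d d' (G : 'M[A]_d) (C : 'M[A]_(d', d)) a b :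
  bf (C *m G *m C^T) a b = bf G (a *m C) (b *m C).
Proof. by rewrite /bf trmx_mul !mulmxA. Qed.

Lemma symC d d' (G : 'M[A]_d) (C : 'M[A]_(d', d)) : G^T = G -> (C *m G *m C^T)^T = C *m G *m C^T.
Proof. by move=> Gs; rewrite !trmx_mul trmxK Gs mulmxA. Qed.

Lemma base : PP 0 0.
Proof.
move=> d G u v Gs Gu _ _; exists d, 1%:M; split => //; last by case.
- by rewrite subn0 muln0 subn0.
- by rewrite mul1mx trmx1 mulmx1.
- by case.
Qed.

Lemma stepU s r : PP s r -> PP s r.+1.
Proof.
move=> IH [|d] G u v Gs Gu uu uo.
  exists 0, 0; split => //; first by rewrite unitmxE det_mx00 unitr1.
  - by move=> i; apply: flatmx0.
  - by move=> i; apply: flatmx0.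
have [C1 [D1 [C1h C1u Ex]]] := unit_step (loc_sum vA) Gs Gu (uu ord0).
pose G1 := C1 *m G *m C1^T.
pose u' := fun i => u (lift ord0 i) *m D1.
have uE : forall i, u (lift ord0 i) = u' i *m C1.
  move=> i; apply: Ex; apply: bf_mx; apply: uo; by rewrite eq_sym neq_lift.
pose v' := fun j => (invmx G1 *m (C1 *m G *m (v j)^T))^T.
have vE : forall j, C1 *m G *m (v j)^T = G1 *m (v' j)^T.
  by move=> j; rewrite trmxK mulmxA mulmxV // mul1mx.
have uu' : forall i, bf G1 (u' i) (u' i) \is a GRing.unit.
  by move=> i; rewrite bf_C -uE.
have uo' : forall i j, i != j -> bf G1 (u' i) (u' j) = 0.
  by move=> i j ij; rewrite bf_C -!uE; apply: uo; rewrite (inj_eq (@lift_inj _ ord0)).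
have [d'' [C2 [hb C2u C2uo C2v]]] := IH d G1 u' v' (symC _ Gs) C1u uu' uo'.
exists d'', (C2 *m C1); split.
- by rewrite subSS.
- by rewrite trmx_mul !mulmxA -(mulmxA C2 C1 G) -(mulmxA C2 (C1 *m G)) -/G1.
- move=> i; case: (unliftP ord0 i) => [i' ->|->].
    by rewrite uE trmx_mul -!mulmxA (mulmxA G) (mulmxA C1) (mulmxA C1) -/G1 mulmxA C2uo.
  by rewrite -!mulmxA (mulmxA C1) C1h mulmx0.
- by move=> j; rewrite -!mulmxA (mulmxA C1) vE mulmxA C2v.
Qed.

Lemma stepV s : (forall r, PP s r) -> PP s.+1 0.
Proof.
move=> IH d G u v Gs Gu _ _.
have [m [hs [m2 hu ho hv]]] := v_step vA u2 (v ord0) Gs Gu.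
have [d' [C [hb Cu Ch Cv]]] := IH m d G hs (fun j => v (lift ord0 j)) Gs Gu hu ho.
exists d', C; split => //.
- apply: leq_trans hb; rewrite subn0 -subnDA leq_sub2l //.
  by rewrite mulnS leq_add2r.
- by case.
- move=> j; case: (unliftP ord0 j) => [j' ->|->]; first exact: Cv.
  apply/matrixP => i k; rewrite (ord1 k) bf_entry [RHS]mxE; apply: hv => l.
  by rewrite -bf_entry Ch mxE.
Qed.

Lemma mainPP s r : PP s r.
Proof.
elim: s r => [|s IHs] r.
  by elim: r => [|r IHr]; [exact: base|exact: stepU].
elim: r => [|r IHr]; [exact: stepV|exact: stepU].
Qed.
End Main.

Section Final.
Variable A : idomainType.

Lemma qbf n (x : 'rV[A]_n) : qform x = bf 1%:M x x.
Proof. by rewrite /qform /bf mulmx1 mxE; apply: eq_bigr => i _; rewrite !mxE expr2. Qed.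

Lemma Bq_bf n (x y : 'rV[A]_n) : Bq x y = 2%:R * bf 1%:M x y.
Proof.
have e : bf 1%:M y x = bf 1%:M x y := bfC _ _ (trmx1 _ _).
rewrite /Bq !qbf bfDl !bfDr e; ring.
Qed.

Lemma bf_sumr n (G : 'M[A]_n) x k (c : 'I_k -> A) (w : 'I_k -> 'rV[A]_n) :
  bf G x (\sum_(i < k) c i *: w i) = \sum_(i < k) c i * bf G x (w i).
Proof.
elim: k c w => [|k IH] c w; first by rewrite !big_ord0 bf0r.
by rewrite !big_ord_recr /= bfDr bfZr IH.
Qed.

Lemma linsum n (Wp : 'rV[A]_n -> Prop) f :
  (forall a x y, Wp x -> Wp y -> Wp (a *: x + y)) -> Wp 0 -> linform_on Wp f ->
  forall k (c : 'I_k -> A) w, (forall i, Wp (w i)) ->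
  Wp (\sum_(i < k) c i *: w i) /\ f (\sum_(i < k) c i *: w i) = \sum_(i < k) c i * f (w i).
Proof.
move=> Wc W0 lf; elim => [|k IH] c w Ww.
  rewrite !big_ord0; split => //.
  have := lf 1 0 0 W0 W0; rewrite scaler0 addr0 mul1r => e.
  by apply: (addrI (f 0)); rewrite addr0 -e.
have [IH1 IH2] := IH (fun i => c (widen_ord (leqnSn k) i)) (fun i => w (widen_ord (leqnSn k) i)) (fun i => Ww _).
rewrite !big_ord_recr /= addrC [X in _ /\ _ = X]addrC; split; first exact: Wc.
by rewrite lf // IH2.
Qed.

Lemma invK d (K : 'M[A]_d) (z : 'rV[A]_d) : K \in unitmx -> z *m K = 0 -> z = 0.
Proof. by move=> Ku zK; rewrite -[z]mulmx1 -(mulmxV Ku) mulmxA zK mul0mx. Qed.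

End Final.

Unset Implicit Arguments. Set Strict Implicit.

Theorem lemma2p9 (A : idomainType) (n r s : nat)
    (u : 'I_r -> 'rV[A]_n) (v : 'I_s -> 'rV[A]_n) :
  valuation_ring A ->
  (2%:R : A) \is a GRing.unit ->
  is_frame u -> is_frame v ->
  exists (d : nat) (W : 'rV[A]_n -> Prop),
    (n - r - 2 * s <= d)%N /\
    (forall x, W x -> perp (fspan u) x /\ perp (fspan v) x) /\
    nonsingular_subspace d W.
Proof.
move=> vA u2 [uq uB] [vq vB].
have two0 : forall t : A, 2%:R * t = 0 -> t = 0.
  move=> t /eqP; rewrite mulf_eq0 => /orP [/eqP h|/eqP //].
  by move: u2; rewrite h unitr0.
have uu : forall i, bf 1%:M (u i) (u i) \is a GRing.unit by move=> i; rewrite -qbf uq unitr1.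
have uo : forall i j, i != j -> bf 1%:M (u i) (u j) = 0.
  by move=> i j ij; apply: two0; rewrite -Bq_bf uB.
have [d [C [hb Ku Cu Cv]]] := @mainPP A vA u2 s r n 1%:M u v (trmx1 _ _) (unitmx1 _ _) uu uo.
rewrite mulmx1 in Ku.
set K := C *m C^T in Ku.
pose W := fun x : 'rV[A]_n => exists a : 'rV[A]_d, x = a *m C.
have Wc : forall a x y, W x -> W y -> W (a *: x + y).
  by move=> a x y [b ->] [b' ->]; exists (a *: b + b'); rewrite mulmxDl scalemxAl.
have W0 : W 0 by exists 0; rewrite mul0mx.
have perpW : forall k (w : 'I_k -> 'rV[A]_n), (forall i, C *m 1%:M *m (w i)^T = 0) ->
    forall x, W x -> perp (fspan w) x.
  move=> k w Cw x [a ->] y [c ->]; rewrite Bq_bf bf_sumr big1 ?mulr0 // => i _.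
  by rewrite /bf -!mulmxA (mulmxA C) Cw mulmx0 mxE mulr0.
exists d, W; split => //; split; first by move=> x Wx; split; apply: perpW.
split.
  exists (fun i => row i C); split.
    move=> c hc i.
    have : (\row_j c j) *m C = 0.
      by rewrite mulmx_sum_row -[RHS]hc; apply: eq_bigr => j _; rewrite mxE.
    move=> /(congr1 (mulmx^~ C^T)); rewrite mul0mx -mulmxA -/K => /(invK Ku) /matrixP /(_ 0 i).
    by rewrite !mxE.
  move=> x; split.
    by move=> [a ->]; exists (fun i => a 0 i); rewrite mulmx_sum_row.
  move=> [c ->]; exists (\row_j c j); rewrite mulmx_sum_row.
  by apply: eq_bigr => j _; rewrite mxE.
have WrC : forall i, W (row i C) by move=> i; exists (delta_mx 0 i); rewrite rowE.
have BqK : forall a b, Bq (a *m C) (b *m C) = 2%:R * bf K a b.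
  by move=> a b; rewrite Bq_bf -bf_C mulmx1.
move=> f lf.
have fC : forall b : 'rV[A]_d, f (b *m C) = \sum_i b 0 i * f (row i C).
  move=> b; rewrite mulmx_sum_row.
  exact: (linsum Wc W0 lf (fun i => b 0 i) WrC).2.
split.
  pose F := \row_i f (row i C).
  exists ((2%:R^-1 *: (F *m invmx K)) *m C); split; first by eexists.
  move=> y [b ->]; rewrite BqK bfZl mulrA mulrV // mul1r fC.
  rewrite /bf -(mulmxA F) mulVmx // mulmx1 mxE.
  by apply: eq_bigr => i _; rewrite !mxE mulrC.
move=> x x' [a ->] [a' ->] H1 H2.
have hz : forall b, bf K (a - a') b = 0.
  move=> b; apply: two0; rewrite bfBl mulrBr -!BqK H1 ?H2 ?subrr //; by eexists.
have : (a - a') *m K = 0.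
  apply/matrixP => i j; rewrite (ord1 i) [RHS]mxE.
  by have := hz (delta_mx 0 j); rewrite /bf trmx_delta -colE mxE.
by move/(invK Ku)/eqP; rewrite subr_eq0 => /eqP ->.
Qed.
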